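(* Let $\Gamma:=\mathrm{Cos}(G,H,A)$ be a vertex-transitive graph and let $B$ be a subset of $A$. If every $\varphi\in\mathrm{Aut}(\Gamma)_H$ fixes the set $\{Hx\mid x\in B\}$ pointwise, then every $\varphi\in\mathrm{Aut}(\Gamma)_H$ fixes the set $\{Hx\mid x\in\langle B\rangle\}$ pointwise.
   Context: $G$ is a finite group, $H\le G$, and $A\subseteq G$ is a union of $(H,H)$-double cosets with $A=A^{-1}$. The coset graph $\mathrm{Cos}(G,H,A)$ has vertex set the right cosets of $H$ in $G$, with $Hx$ adjacent to $Hy$ iff $yx^{-1}\in A$. $\mathrm{Aut}(\Gamma)_H$ denotes the stabilizer in $\mathrm{Aut}(\Gamma)$ of the vertex $H$. *)

(* Defs.v *)
From mathcomp Require Import all_boot all_fingroup.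
Set Implicit Arguments. Unset Strict Implicit. Unset Printing Implicit Defensive.
Local Open Scope group_scope.

Section CosetGraph.
Variable gT : finGroupType.
Implicit Types (G H A : {set gT}) (U W : {set gT}).

Definition cos_vertices G H : {set {set gT}} := rcosets H G.

(* Adjacency: Hx ~ Hy iff y x^-1 \in A (independent of representatives
   when A is a union of (H,H)-double cosets). *)
Definition cos_adj A U W : bool :=
  [exists x, [exists y, [&& x \in U, y \in W & y * x^-1 \in A]]].

Definition double_coset_union H A : Prop := H * A * H = A.

Definition cos_aut G H A (f : {set gT} -> {set gT}) : Prop :=
  [/\ {in cos_vertices G H, forall U, f U \in cos_vertices G H},
      {in cos_vertices G H &, injective f} &
      {in cos_vertices G H &, forall U W, cos_adj A (f U) (f W) = cos_adj A U W}].

Definition cos_vertex_transitive G H A : Prop :=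
  forall U W, U \in cos_vertices G H -> W \in cos_vertices G H ->
    exists2 f, cos_aut G H A f & f U = W.
End CosetGraph.

(* Main.v *)
Require Import Defs.
From mathcomp Require Import all_boot all_fingroup.
Local Open Scope group_scope.

Lemma adj_rmul (gT : finGroupType) (A U W : {set gT}) g :
  cos_adj A (U :* g) (W :* g) = cos_adj A U W.
Proof.
apply/idP/idP => /existsP [x /existsP [y /and3P [hx hy ha]]]; apply/existsP.
- exists (x * g^-1); apply/existsP; exists (y * g^-1).
  rewrite -mem_rcoset hx -mem_rcoset hy /=.
  by rewrite invMg invgK !mulgA mulgKV.
- exists (x * g); apply/existsP; exists (y * g).
  rewrite !mem_rcoset !mulgK hx hy /=.
  by rewrite invMg !mulgA mulgK.
Qed.

Lemma aut_rmul (gT : finGroupType) (G H : {group gT}) (A : {set gT}) g :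
  g \in G -> cos_aut G H A (fun U => U :* g).
Proof.
move=> gG; split.
- move=> U /rcosetsP [x xG ->]; apply/rcosetsP; exists (x * g).
    exact: groupM.
  by rewrite rcosetM.
- move=> U W _ _ E. by rewrite -(rcosetK g U) E rcosetK.
- move=> U W _ _; exact: adj_rmul.
Qed.

Lemma aut_comp (gT : finGroupType) (G H : {group gT}) (A : {set gT}) f h :
  cos_aut G H A f -> cos_aut G H A h -> cos_aut G H A (fun U => f (h U)).
Proof.
move=> [f1 f2 f3] [h1 h2 h3]; split.
- by move=> U hU; apply: f1; apply: h1.
- move=> U W hU hW E; apply: h2 => //; apply: f2 => //; exact: h1.
- move=> U W hU hW; rewrite f3 ?h3 //; exact: h1.
Qed.

Theorem lemma3p5 (gT : finGroupType) (G H : {group gT}) (A B : {set gT}) :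
  H \subset G -> A \subset G -> double_coset_union H A -> A^-1 = A ->
  cos_vertex_transitive G H A ->
  B \subset A ->
  (forall f, cos_aut G H A f -> f (H : {set gT}) = H ->
     forall x, x \in B -> f (H :* x) = H :* x) ->
  forall f, cos_aut G H A f -> f (H : {set gT}) = H ->
     forall x, x \in <<B>> -> f (H :* x) = H :* x.
Proof.
move=> sHG sAG _ _ _ sBA hB.
have BG : forall x, x \in B -> x \in G.
  by move=> x xB; apply: (subsetP sAG); apply: (subsetP sBA).
pose P y := y \in G /\ forall f, cos_aut G H A f -> f (H : {set gT}) = H ->
   f (H :* y) = H :* y.
have step : forall y x, P y -> x \in B -> P (y * x).
  move=> y x [yG hy] xB; split; first by rewrite groupM // BG.
  move=> f af fH.
  have xG := BG x xB.
  pose f' := fun U => f (U :* x) :* x^-1.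
  have af' : cos_aut G H A f'.
    have xVG : x^-1 \in G by rewrite groupV.
    exact: (aut_comp _ _ _ _ _ _ (aut_rmul _ G H A _ xVG) (aut_comp _ _ _ _ _ _ af (aut_rmul _ G H A _ xG))).
  have f'H : f' H = H by rewrite /f' hB // rcosetK.
  have := hy f' af' f'H; rewrite /f' => E.
  by rewrite rcosetM -(rcosetKV x (f (H :* y :* x))) E.
move=> f af fH x /gen_prodgP [n [c cB ->]].
suff : P (\prod_(i < n) c i) by case=> _ h; exact: h.
elim: n c cB => [|n IH] c cB.
  rewrite big_ord0; split; first exact: group1.
  by move=> g _ gH; rewrite rcoset1.
rewrite big_ord_recr /=; apply: step (cB _).
exact: IH (fun i => c (widen_ord (leqnSn n) i)) (fun i => cB _).
Qed.
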